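(* For $n\ge1$, $\left|\Pi_n\wr C_2(1^11^2,1^12^2,1^21^1)\right|=\sum_{i=0}^nB(i)B(n-i)$, where $B(m)$ is the $m$th Bell number.
   Context: For $n\ge0$ let $[n]=\{1,\dots,n\}$. A $2$-colored set partition of $[n]$ is a set partition of $[n]$ together with an assignment of a color from $\{1,2\}$ to each element; $\Pi_n\wr C_2$ is the set of these. For a set $S$ of patterns, $\Pi_n\wr C_2(S)$ is the set of such colored partitions avoiding every pattern in $S$ in the pattern sense. For the patterns used here: $\sigma$ contains $1^11^2$ iff there are $i<j$ in the same block with $i$ colored $1$ and $j$ colored $2$; $1^21^1$ iff there are $i<j$ in the same block with $i$ colored $2$ and $j$ colored $1$; $1^12^2$ iff there are $i<j$ in different blocks with $i$ colored $1$ and $j$ colored $2$. $B(m)$ is the number of set partitions of $[m]$, with $B(0)=1$. *)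

(* Defs.v *)
From mathcomp Require Import all_boot.
Set Implicit Arguments. Unset Strict Implicit. Unset Printing Implicit Defensive.

(* [n] = {1..n} is modelled by 'I_n = {0..n-1} (order-preserving shift).
   Colours {1,2} are modelled by 'I_2: ordinal 0 = colour 1, ordinal 1 = colour 2. *)

Definition col1 : 'I_2 := @Ordinal 2 0 isT.
Definition col2 : 'I_2 := @Ordinal 2 1 isT.

Definition bell (m : nat) : nat :=
  #|[set P : {set {set 'I_m}} | partition P [set: 'I_m]]|.

Definition colored_partition (n : nat) := ({set {set 'I_n}} * {ffun 'I_n -> 'I_2})%type.

Definition is_cpart n (x : colored_partition n) : bool :=
  partition x.1 [set: 'I_n].

Definition same_block n (P : {set {set 'I_n}}) (i j : 'I_n) : bool :=
  [exists B in P, (i \in B) && (j \in B)].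

Definition contains_1112 n (x : colored_partition n) : bool :=
  [exists i : 'I_n, exists j : 'I_n,
     [&& i < j, same_block x.1 i j, x.2 i == col1 & x.2 j == col2]].

Definition contains_1211 n (x : colored_partition n) : bool :=
  [exists i : 'I_n, exists j : 'I_n,
     [&& i < j, same_block x.1 i j, x.2 i == col2 & x.2 j == col1]].

Definition contains_1122 n (x : colored_partition n) : bool :=
  [exists i : 'I_n, exists j : 'I_n,
     [&& i < j, ~~ same_block x.1 i j, x.2 i == col1 & x.2 j == col2]].

Definition avoiders (n : nat) : {set colored_partition n} :=
  [set x | [&& is_cpart x, ~~ contains_1112 x, ~~ contains_1122 x
             & ~~ contains_1211 x]].

(* Main.v *)
Require Import Defs.
From mathcomp Require Import all_boot.
From mathcomp Require Import zify.
Set Implicit Arguments. Unset Strict Implicit. Unset Printing Implicit Defensive.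

Lemma card_bij_in (T U : finType) (A : {set T}) (B : {set U}) (f : T -> U) (g : U -> T) :
  {in A, forall x, f x \in B} -> {in B, forall y, g y \in A} ->
  {in A, cancel f g} -> {in B, cancel g f} -> #|A| = #|B|.
Proof.
move=> fA gB fK gK.
have inj : {in A &, injective f}.
  by move=> x y xA yA e; rewrite -(fK x xA) -(fK y yA) e.
rewrite -(card_in_imset inj); suff -> : f @: A = B by [].
apply/setP => y.
apply/imsetP/idP => [[x xA ->]|yB]; first exact: fA.
by exists (g y); [apply: gB | rewrite gK].
Qed.

Lemma imset_preim_sub (T U : finType) (f : T -> U) (B : {set U}) :
  B \subset f @: setT -> f @: (f @^-1: B) = B.
Proof.
move=> /subsetP sB; apply/setP => y; apply/imsetP/idP => [[x]|yB].
  by rewrite inE => xB ->.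
case/imsetP: (sB y yB) => x _ ey; exists x => //; by rewrite inE -ey.
Qed.

Lemma preim_imset_inj (T U : finType) (f : T -> U) (C : {set T}) :
  injective f -> f @^-1: (f @: C) = C.
Proof.
move=> inj; apply/setP => x; rewrite inE; apply/imsetP/idP => [[z zC /inj ->]//|xC].
by exists x.
Qed.

Definition compat (T : finType) (D : {set T}) (P : {set {set T}}) :=
  [forall B in P, (B \subset D) || (B \subset ~: D)].

Definition Sub (T : finType) (D : {set T}) (P : {set {set T}}) :=
  [set B in P | B \subset D].

Lemma sub_part (T : finType) (D : {set T}) (P : {set {set T}}) :
  partition P setT -> compat D P -> partition (Sub D P) D.
Proof.
move=> hP /forall_inP hc; apply/and3P; split.
- apply/eqP/setP => x; apply/bigcupP/idP => [[B]|xD].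
    by rewrite inE => /andP[_ /subsetP sB] /sB.
  have : x \in cover P by rewrite (cover_partition hP).
  case/bigcupP => B BP xB; exists B => //; rewrite inE BP /=.
  case/orP: (hc B BP) => // /subsetP /(_ x xB); by rewrite inE xD.
- apply: trivIsetS (partition_trivIset hP).
  by apply/subsetP => B; rewrite inE => /andP[].
- by rewrite inE (partition0 hP).
Qed.

Lemma partition_union (T : finType) (X Y : {set {set T}}) (D1 D2 : {set T}) :
  partition X D1 -> partition Y D2 -> [disjoint D1 & D2] ->
  partition (X :|: Y) (D1 :|: D2).
Proof.
move=> hX hY dis; apply/and3P; split.
- by rewrite /cover bigcup_setU -/(cover X) -/(cover Y) (cover_partition hX) (cover_partition hY).
- apply: trivIsetU; [exact: partition_trivIset hX | exact: partition_trivIset hY|].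
  by rewrite (cover_partition hX) (cover_partition hY).
- by rewrite inE (partition0 hX) (partition0 hY).
Qed.

Section Split.
Variables (T T1 T2 : finType) (L : {set T}) (f1 : T1 -> T) (f2 : T2 -> T).
Hypotheses (inj1 : injective f1) (inj2 : injective f2).
Hypotheses (hf1 : f1 @: setT = L) (hf2 : f2 @: setT = ~: L).

Let A1 := [set P : {set {set T1}} | partition P setT].
Let A2 := [set P : {set {set T2}} | partition P setT].

Definition Fmap (PP : {set {set T1}} * {set {set T2}}) : {set {set T}} :=
  [set f1 @: (B : {set T1}) | B in PP.1] :|: [set f2 @: (B : {set T2}) | B in PP.2].
Definition Gmap (P : {set {set T}}) : {set {set T1}} * {set {set T2}} :=
  ([set f1 @^-1: (B : {set T}) | B in Sub L P], [set f2 @^-1: (B : {set T}) | B in Sub (~: L) P]).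

Lemma K1 (U : finType) (f : U -> T) P D : f @: setT = D ->
  [set f @: (C : {set U}) | C in [set f @^-1: (B : {set T}) | B in Sub D P]] = Sub D P.
Proof.
move=> hf; rewrite -imset_comp -[RHS]imset_id; apply: eq_in_imset => B.
by rewrite inE => /andP[_ sB] /=; rewrite imset_preim_sub // hf.
Qed.

Lemma K3 (U : finType) (f : U -> T) (P : {set {set U}}) : injective f ->
  [set f @^-1: (B : {set T}) | B in [set f @: (C : {set U}) | C in P]] = P.
Proof.
move=> inj; rewrite -imset_comp -[RHS]imset_id; apply: eq_in_imset => C _ /=.
exact: preim_imset_inj.
Qed.

Lemma partL (P1 : {set {set T1}}) : partition P1 setT -> partition [set f1 @: (B : {set T1}) | B in P1] L.
Proof. by move=> h; rewrite -hf1 imset_partition. Qed.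
Lemma partR (P2 : {set {set T2}}) : partition P2 setT -> partition [set f2 @: (B : {set T2}) | B in P2] (~: L).
Proof. by move=> h; rewrite -hf2 imset_partition. Qed.

Lemma Sub_all (X : {set {set T}}) D : partition X D -> Sub D X = X.
Proof.
move=> h; apply/setP => B; rewrite inE; case BX: (B \in X) => //=.
exact: partitionS h BX.
Qed.

Lemma Sub_none (X : {set {set T}}) (D E : {set T}) : partition X D -> [disjoint D & E] -> Sub E X = set0.
Proof.
move=> h dis; apply/setP => B; rewrite !inE; apply/negP => /andP[BX sBE].
have sBD := partitionS h BX.
have := partition_neq0 h BX; case/set0Pn => x xB.
by have := disjointFr dis (subsetP sBD x xB); rewrite (subsetP sBE x xB).
Qed.

Lemma SubU (X Y : {set {set T}}) D : Sub D (X :|: Y) = Sub D X :|: Sub D Y.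
Proof. by apply/setP => B; rewrite !inE andb_orl. Qed.

Lemma count_split :
  #|[set P : {set {set T}} | partition P setT & compat L P]| = #|A1| * #|A2|.
Proof.
rewrite -cardsX; symmetry; apply: (@card_bij_in _ _ _ _ Fmap Gmap).
- case=> P1 P2; rewrite inE /= !inE => /andP[h1 h2].
  have p1 := partL h1; have p2 := partR h2.
  have := partition_union p1 p2; rewrite setUCr => ->; last by rewrite disjoints_subset setCK.
  apply/forall_inP => B; case/setUP => BX.
    by rewrite (partitionS p1 BX).
  by rewrite (partitionS p2 BX) orbT.
- move=> P; rewrite inE => /andP[hP hc]; rewrite !inE /=.
  have hc' : compat (~: L) P.
    apply/forall_inP => B BP; rewrite setCK orbC.
    exact: (forall_inP hc).
  have s1 := sub_part hP hc; have s2 := sub_part hP hc'.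
  by rewrite -(imset_partition _ _ inj1) K1 // hf1 -(imset_partition _ _ inj2) K1 // hf2 s1 s2 /=.
- case=> P1 P2; rewrite inE /= !inE => /andP[h1 h2].
  have p1 := partL h1; have p2 := partR h2.
  rewrite /Gmap /Fmap /= !SubU (Sub_all p1) (Sub_all p2) (Sub_none p1 (E := ~: L)).
    rewrite (Sub_none p2 (E := L)); last by rewrite disjoint_sym disjoints_subset setCK.
    by rewrite setU0 set0U (K3 _ inj1) (K3 _ inj2).
  by rewrite disjoints_subset setCK.
- move=> P; rewrite inE => /andP[hP hc].
  rewrite /Fmap /Gmap /= K1 // K1 //.
  apply/setP => B; rewrite !inE; case BP: (B \in P) => //=.
  exact: (forall_inP hc B BP).
Qed.
End Split.


Lemma lt_shift (n k : nat) (j : 'I_(n - k)) : k + j < n.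
Proof. by have := ltn_ord j; rewrite ltn_subRL. Qed.

Definition f2 (n k : nat) (j : 'I_(n - k)) : 'I_n := Ordinal (lt_shift j).

Lemma f2_inj n k : injective (@f2 n k).
Proof. by move=> a b /(congr1 val) /= /addnI e; apply/val_inj. Qed.

Lemma widen_ord_inj n k (hk : k <= n) : injective (widen_ord hk).
Proof. by move=> a b /(congr1 val) /= e; apply/val_inj. Qed.

Definition LL (n k : nat) : {set 'I_n} := [set i : 'I_n | i < k].

Lemma hf1 n k (hk : k <= n) : widen_ord hk @: setT = LL n k.
Proof.
apply/setP => i; rewrite inE; apply/imsetP/idP => [[j _ ->] /=|ik]; first exact: ltn_ord.
by exists (Ordinal ik) => //; apply/val_inj.
Qed.

Lemma hf2 n k : @f2 n k @: setT = ~: LL n k.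
Proof.
apply/setP => i; rewrite !inE; apply/imsetP/idP => [[j _ ->] /=|ik].
  by rewrite -leqNgt leq_addr.
have hj : i - k < n - k by have := ltn_ord i; move: ik; rewrite -leqNgt; lia.
exists (Ordinal hj) => //; apply/val_inj => /=; move: ik; rewrite -leqNgt; lia.
Qed.

Lemma cardLL n k : k <= n -> #|LL n k| = k.
Proof.
move=> hk; rewrite -(hf1 hk) card_imset; last by move=> a b /(congr1 val) /= e; apply/val_inj.
by rewrite cardsT card_ord.
Qed.

Lemma count_k n k (hk : k <= n) :
  #|[set P : {set {set 'I_n}} | partition P setT & compat (LL n k) P]| = bell k * bell (n - k).
Proof. exact: (count_split (@widen_ord_inj n k hk) (@f2_inj n k) (hf1 hk) (hf2 n k)). Qed.

Definition ck (n k : nat) : {ffun 'I_n -> 'I_2} := [ffun i : 'I_n => if i < k then col2 else col1].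

Lemma ckE2 n k i : (ck n k i == col2) = (i < k).
Proof. by rewrite ffunE; case: (i < k). Qed.
Lemma ckE1 n k i : (ck n k i == col1) = ~~ (i < k).
Proof. by rewrite ffunE; case: (i < k). Qed.

Lemma I2cases (a : 'I_2) : a != col2 -> a = col1.
Proof. move=> h; apply/val_inj; move: h; case: a => [[|[|m]]] //= h. Qed.

Lemma avoid_col n (x : colored_partition n) :
  x \in avoiders n -> x.2 = ck n #|[set i | x.2 i == col2]|.
Proof.
case: x => P c; rewrite inE => /and4P[hp n1112 n1122 n1211] /=.
have mono : forall i j : 'I_n, i < j -> c j == col2 -> c i == col2.
  move=> i j ij cj; apply/negPn/negP => ci; have ci1 := I2cases ci.
  case sb: (same_block P i j).
    by move/negP: n1112; apply; apply/existsP; exists i; apply/existsP; exists j; rewrite /= ij sb ci1 cj eqxx.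
  by move/negP: n1122; apply; apply/existsP; exists i; apply/existsP; exists j; rewrite /= ij sb ci1 cj eqxx.
apply/ffunP => i; rewrite ffunE; set s := #|_|.
case: ifP => hi.
  apply/eqP; apply/negPn/negP => ci.
  have sub : [set i | c i == col2] \subset LL n i.
    apply/subsetP => j; rewrite !inE => cj; rewrite ltnNge; apply/negP => ij.
    rewrite leq_eqVlt in ij; case/orP: ij => [/eqP ij | ij].
      have e : i = j by apply/val_inj.
      by move: ci; rewrite e cj.
    by move: ci; rewrite (mono _ _ ij cj).
  have := subset_leq_card sub; rewrite cardLL; last exact: ltnW (ltn_ord i).
  by rewrite -/s leqNgt hi.
apply: I2cases; apply/negP => ci.
have sub : LL n i.+1 \subset [set i | c i == col2].
  apply/subsetP => j; rewrite !inE ltnS leq_eqVlt => /orP[/eqP ij | ij].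
    have e : j = i by apply/val_inj.
    by rewrite e.
  exact: mono ij ci.
have := subset_leq_card sub; rewrite cardLL; last exact: ltn_ord i.
by rewrite -/s => h; move: hi; rewrite h.
Qed.

Lemma avoid_compat n k (x : colored_partition n) :
  x \in avoiders n -> x.2 = ck n k -> compat (LL n k) x.1.
Proof.
case: x => P c; rewrite inE => /and4P[hp n1112 n1122 n1211] /= hc.
apply/forall_inP => B BP; case: (boolP (B \subset LL n k)) => //= hBL.
apply/subsetP => j jB; rewrite !inE; apply/negP => jk.
case/subsetPn: hBL => i iB; rewrite inE -leqNgt => ki.
move/negP: n1211; apply; apply/existsP; exists j; apply/existsP; exists i.
rewrite /= hc ckE2 ckE1 jk -leqNgt ki (leq_trans jk ki) !andbT /=.
by apply/existsP; exists B; rewrite BP jB iB.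
Qed.

Lemma compat_avoid n k P :
  partition P setT -> compat (LL n k) P -> (P, ck n k) \in avoiders n.
Proof.
move=> hp hc; rewrite inE; apply/and4P; split => //.
- apply/existsP => -[i /existsP [j /and4P[ij _ ci cj]]].
  move: ci cj; rewrite /= ckE1 ckE2; lia.
- apply/existsP => -[i /existsP [j /and4P[ij _ ci cj]]].
  move: ci cj; rewrite /= ckE1 ckE2; lia.
- apply/existsP => -[i /existsP [j /and4P[ij sb ci cj]]].
  move: ci cj; rewrite /= ckE1 ckE2 => ci cj.
  case/existsP: sb => B /andP[BP /andP[iB jB]].
  case/orP: (forall_inP hc B BP) => /subsetP s.
    by move: (s j jB); rewrite inE (negbTE cj).
  by move: (s i iB); rewrite !inE ci.
Qed.

Definition gk n (x : colored_partition n) : 'I_n.+1 := inord #|[set i | x.2 i == col2]|.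

Lemma card_k n (k : 'I_n.+1) :
  #|[set x in avoiders n | gk x == k]| =
  #|[set P : {set {set 'I_n}} | partition P setT & compat (LL n k) P]|.
Proof.
have hk : k <= n by rewrite -ltnS.
have gval : forall x : colored_partition n, gk x == k -> #|[set i | x.2 i == col2]| = k.
  move=> x /eqP <-; rewrite inordK // ltnS.
  by apply: leq_trans (max_card _) _; rewrite card_ord.
apply: (@card_bij_in _ _ _ _ fst (fun P => (P, ck n k))).
- move=> x; rewrite inE => /andP[xa gx]; have := xa; rewrite inE => /and4P[hp _ _ _].
  rewrite inE; apply/andP; split; first exact: hp.
  have e2 : x.2 = ck n k by rewrite (avoid_col xa) gval.
  exact: avoid_compat xa e2.
- move=> P PA; move: PA; rewrite inE => /andP[hp hc]; rewrite inE (compat_avoid hp hc) /=.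
  apply/eqP; apply/val_inj; rewrite /gk /=.
  have -> : [set i | ck n k i == col2] = LL n k by apply/setP => i; rewrite !inE ckE2.
  by rewrite cardLL // inordK // ltnS.
- case=> P c; rewrite inE => /andP[xa gx] /=.
  have e := avoid_col xa; rewrite (gval _ gx) /= in e; by rewrite e.
- by [].
Qed.

Theorem mainTheorem16 (n : nat) : 1 <= n ->
  #|avoiders n| = \sum_(0 <= i < n.+1) bell i * bell (n - i).
Proof.
move=> _; rewrite big_mkord.
rewrite -sum1_card (partition_big (@gk n) xpredT) //=.
apply: eq_bigr => k _; rewrite -count_k; last by rewrite -ltnS.
rewrite -card_k -sum1_card; apply: eq_bigl => x; rewrite inE.
by [].
Qed.
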